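(* Let $d\ge1$, let $n$ be divisible by 4 and sufficiently large with $d=o(\sqrt{n})$. Let $\nu$ be the prefix of length $\frac{n}{4}$ of the infinite binary string $1^1 0^1 1^2 0^2 1^3 0^3\cdots$. Let $x$ be a binary string of length $\frac{n}{4}$ with exactly $d$ ones and $y$ a binary string of length $\frac{n}{4}$ with $\mathsf{HAM}(x,y)=d+1$, and set $s(x,y)=\nu^R\, x\, y^R\, \nu$. Then every substring of $s(x,y)$ that is a $d$-near-palindrome has length at most $200d^2+\frac{n}{2}$.
   Context: $1^k$ and $0^k$ denote $k$ repetitions of the symbol; juxtaposition denotes concatenation; $T^R$ denotes the reverse of $T$. $\mathsf{HAM}(x,y)$ is the number of positions where equal-length strings differ. A string $T$ of length $m$ is a $d$-near-palindrome if $|\{i\in[m]: T[i]\neq T[m+1-i]\}|\le d$. *)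

(* Defs.v *)
(* Binary strings are represented as seq bool (true = 1). *)
From mathcomp Require Import all_boot.
Set Implicit Arguments. Unset Strict Implicit. Unset Printing Implicit Defensive.

Definition nu_blocks (k : nat) : seq bool :=
  flatten [seq nseq j true ++ nseq j false | j <- iota 1 k].

(* Prefix of length m of the infinite string 1^1 0^1 1^2 0^2 1^3 0^3 ...
   (nu_blocks m has length m(m+1) >= m, so the prefix is exact). *)
Definition nu_prefix (m : nat) : seq bool := take m (nu_blocks m).

Definition ham (x y : seq bool) : nat := count (fun p => p.1 != p.2) (zip x y).

(* T (length m) is a d-near-palindrome if #{i : T[i] != T[m+1-i]} <= d
   (0-indexed: T[i] vs T[m-1-i]). *)
Definition near_pal (d : nat) (T : seq bool) : bool :=
  count (fun i => nth false T i != nth false T (size T - 1 - i)) (iota 0 (size T)) <= d.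

Definition s_xy (n : nat) (x y : seq bool) : seq bool :=
  rev (nu_prefix (n %/ 4)) ++ x ++ rev y ++ nu_prefix (n %/ 4).

(* Main.v *)
Require Import Defs.
From mathcomp Require Import all_boot.
From mathcomp Require Import zify.
Set Implicit Arguments. Unset Strict Implicit. Unset Printing Implicit Defensive.

Lemma nu_blocksS k : nu_blocks k.+1 = nu_blocks k ++ (nseq k.+1 true ++ nseq k.+1 false).
Proof.
rewrite /nu_blocks.
have -> : iota 1 k.+1 = iota 1 k ++ [:: k.+1] by rewrite -[k.+1]addn1 iotaD addnC.
by rewrite map_cat flatten_cat /= cats0.
Qed.

Lemma size_nu_blocks k : size (nu_blocks k) = k * k.+1.
Proof.
elim: k => [//|k IH]; rewrite nu_blocksS size_cat IH size_cat !size_nseq; nia.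
Qed.

Lemma nth_nu_blocks_stable k l u : u < size (nu_blocks k) ->
  nth false (nu_blocks (k + l)) u = nth false (nu_blocks k) u.
Proof.
move=> hu; elim: l => [|l IH]; first by rewrite addn0.
rewrite addnS nu_blocksS nth_cat IH ifT //; rewrite !size_nu_blocks in hu *; nia.
Qed.

Lemma size_nu_prefix m : size (nu_prefix m) = m.
Proof. rewrite /nu_prefix size_take size_nu_blocks; case: m => // m; rewrite ifT //; nia. Qed.

Lemma nth_nu_prefix m u : u < m -> nth false (nu_prefix m) u = nth false (nu_blocks m) u.
Proof. by move=> hu; rewrite /nu_prefix nth_take. Qed.

Lemma nth_nu_big m k u : u < m -> u < k.+1 * k.+2 ->
  nth false (nu_prefix m) u = nth false (nu_blocks k.+1) u.
Proof.
move=> hum huk; rewrite nth_nu_prefix //.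
case: (leqP k.+1 m) => hkm.
  by rewrite -(subnKC hkm) nth_nu_blocks_stable // size_nu_blocks.
have -> : k.+1 = m + (k.+1 - m) by lia.
by rewrite nth_nu_blocks_stable // size_nu_blocks; nia.
Qed.

Lemma nu_one m k r : k * k.+1 + r < m -> r <= k ->
  nth false (nu_prefix m) (k * k.+1 + r) = true.
Proof.
move=> h1 h2; rewrite (@nth_nu_big m k) //; last by nia.
rewrite nu_blocksS nth_cat size_nu_blocks ifF; last by lia.
by rewrite addKn nth_cat size_nseq ifT ?nth_nseq ?ifT //; lia.
Qed.

Lemma nu_zero m k r : k * k.+1 + k.+1 + r < m -> r <= k ->
  nth false (nu_prefix m) (k * k.+1 + k.+1 + r) = false.
Proof.
move=> h1 h2; rewrite (@nth_nu_big m k) //; last by nia.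
rewrite nu_blocksS nth_cat size_nu_blocks ifF; last by lia.
rewrite -addnA addKn nth_cat size_nseq ifF; last by lia.
by rewrite addKn nth_nseq ifT //; lia.
Qed.

Lemma half_ones k N : N <= size (nu_blocks k) -> N <= 2 * count id (take N (nu_blocks k)).
Proof.
elim: k N => [|k IH] N hN; first by rewrite /= in hN; lia.
rewrite nu_blocksS take_cat.
case: ifP => hlt; first by apply: IH; lia.
rewrite count_cat.
have h0 := IH _ (leqnn _); rewrite take_size in h0.
move: hN; rewrite nu_blocksS size_cat size_cat !size_nseq => hN.
rewrite take_cat size_nseq; case: ifP => h2.
  rewrite take_nseq ?count_nseq /=; lia.
rewrite count_cat count_nseq take_nseq ?count_nseq /=; lia.
Qed.

Lemma count_nth (l : seq bool) N : N <= size l ->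
  count id (take N l) = count (nth false l) (iota 0 N).
Proof.
move=> hN.
have e : size (take N l) = N by rewrite size_take; case: ltngtP hN => //; lia.
rewrite -{1}(mkseq_nth false (take N l)) e /mkseq count_map.
apply: eq_in_count => i; rewrite mem_iota => /andP [_ hi] /=.
by rewrite nth_take.
Qed.

Lemma count_id_nth (l : seq bool) : count id l = count (nth false l) (iota 0 (size l)).
Proof. by rewrite -count_nth // take_size. Qed.

Lemma count_inj (P : pred nat) (g : nat -> nat) k M :
  (forall u v, u < k -> v < k -> g u = g v -> u = v) ->
  (forall u, u < k -> g u < M) ->
  count (fun u => P (g u)) (iota 0 k) <= count P (iota 0 M).
Proof.
move=> ginj gM.
have -> : count (fun u => P (g u)) (iota 0 k) = count P (map g (iota 0 k)) by rewrite count_map.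
rewrite -!size_filter; apply: uniq_leq_size.
  rewrite filter_uniq // map_inj_in_uniq ?iota_uniq //.
  by move=> u v; rewrite !mem_iota /= !add0n; apply: ginj.
move=> z; rewrite !mem_filter => /andP [Pz /mapP [u]]; rewrite mem_iota add0n /= => hu ez; subst z.
by rewrite Pz mem_iota /= add0n gM.
Qed.

Lemma count_sub T (a b : pred T) l : count a l <= count (fun z => a z != b z) l + count b l.
Proof. elim: l => //= z l IH; case: (a z); case: (b z) => /=; lia. Qed.

Lemma ham_nth x y : size x = size y ->
  ham x y = count (fun i => nth false x i != nth false y i) (iota 0 (size x)).
Proof.
move=> e; rewrite /ham -(mkseq_nth (false,false) (zip x y)) /mkseq count_map size_zip e minnn.
apply: eq_in_count => i _ /=; by rewrite nth_zip.
Qed.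

Lemma ones_V m N : N <= m -> N <= 2 * count (nth false (nu_prefix m)) (iota 0 N).
Proof.
move=> hN; rewrite -count_nth ?size_nu_prefix //.
have -> : take N (nu_prefix m) = take N (nu_blocks m).
  by rewrite /nu_prefix take_takel.
apply: half_ones; rewrite size_nu_blocks; nia.
Qed.

Definition Sx m (x y : seq bool) := rev (nu_prefix m) ++ x ++ rev y ++ nu_prefix m.

Section Reg.
Variables (m : nat) (x y : seq bool).
Hypotheses (hx : size x = m) (hy : size y = m).
Let V := nu_prefix m.

Lemma SA p : p < m -> nth false (Sx m x y) p = nth false V (m - 1 - p).
Proof.
move=> hp; rewrite /Sx nth_cat size_rev size_nu_prefix hp nth_rev ?size_nu_prefix //.
congr nth; lia.
Qed.

Lemma SM p : m <= p < 3 * m -> nth false (Sx m x y) p = nth false (x ++ rev y) (p - m).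
Proof.
move=> /andP [h1 h2]; rewrite /Sx nth_cat size_rev size_nu_prefix ltnNge h1 /=.
rewrite catA nth_cat size_cat size_rev hx hy ifT //; lia.
Qed.

Lemma SC p : 3 * m <= p < 4 * m -> nth false (Sx m x y) p = nth false V (p - 3 * m).
Proof.
move=> /andP [h1 h2]; rewrite /Sx catA catA nth_cat !size_cat !size_rev size_nu_prefix hx hy ifF; last by lia.
congr nth; lia.
Qed.

Lemma Mx q : q < m -> nth false (x ++ rev y) q = nth false x q.
Proof. by move=> hq; rewrite nth_cat hx hq. Qed.

Lemma My q : q < m -> nth false (x ++ rev y) (2 * m - 1 - q) = nth false y q.
Proof.
move=> hq; rewrite nth_cat hx ifF; last by lia.
rewrite nth_rev ?hy; last by lia.
congr nth; lia.
Qed.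

Lemma size_Sx : size (Sx m x y) = 4 * m.
Proof. rewrite /Sx !size_cat !size_rev size_nu_prefix hx hy; lia. Qed.
End Reg.

Lemma all_count k (Q : pred nat) : (forall u, u < k -> Q u) -> count Q (iota 0 k) = k.
Proof.
move=> h; rewrite (@eq_in_count _ _ predT) ?count_predT ?size_iota //.
by move=> u; rewrite mem_iota add0n => /andP [_ /h].
Qed.

Lemma core m d (x y : seq bool) a L :
 size x = m -> size y = m -> 1 <= d -> 100 * (d * d) <= m ->
 count id x <= 2 * d + 1 -> count id x + count id y <= 3 * d + 1 ->
 count (fun i => nth false x i != nth false y i) (iota 0 m) = d.+1 ->
 a + L <= 4 * m -> 4 * m <= 2 * a + L -> 2 * m + 200 * (d * d) < L ->
 d < count (fun i => nth false (Sx m x y) (a + i) != nth false (Sx m x y) (a + (L - 1 - i))) (iota 0 L).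
Proof.
move=> hx hy hd hm cx cxy hxy h1 h2 h3.
set P := (fun i => _).
have hdd : d <= d * d by nia.
set V := nu_prefix m.
set D := 2 * a + L - 4 * m.
have hD : 2 * a + L = 4 * m + D by lia.
case: (posnP D) => [D0|Dpos].
  have hi := @count_inj P (fun i => m - a + i) m L.
  apply: leq_trans (hi _ _); first last.
  - move=> u hu; lia.
  - move=> u v hu hv; lia.
  rewrite -hxy; apply/eq_leq/eq_in_count => i; rewrite mem_iota add0n => /andP [_ hi'].
  symmetry.
  rewrite /P (@SM m) ?(@SM m) //; try lia.
  have -> : a + (m - a + i) - m = i by lia.
  rewrite (@Mx m x y hx) //.
  have -> : a + (L - 1 - (m - a + i)) - m = 2 * m - 1 - i by lia.
  by rewrite (@My m x y hx hy).
case: (leqP D d) => [Dd|dD].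
  have hma : 2 * (m - a) + D = L - 2 * m by lia.
  have hj : forall r, r < d.+1 -> (d + 1 + r) * (d + 1 + r) <= 9 * (d * d) by move=> r hr; nia.
  have hi := @count_inj P (fun r => m - a - (d + 1 + r) * (d + 1 + r)) d.+1 L.
  apply: leq_trans (hi _ _); first last.
  - move=> u hu; lia.
  - move=> u v hu hv e.
    have e2 : (d + 1 + u) * (d + 1 + u) = (d + 1 + v) * (d + 1 + v).
      have := hj u hu; have := hj v hv; lia.
    nia.
  rewrite all_count // => r hr.
  have hjr := hj r hr.
  rewrite /P (@SA m x y) ?(@SC m x y) //; try lia.
  have -> : m - 1 - (a + (m - a - (d + 1 + r) * (d + 1 + r))) = (d + r) * (d + r).+1 + (d + r) by nia.
  have -> : a + (L - 1 - (m - a - (d + 1 + r) * (d + 1 + r))) - 3 * m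
     = (d + r) * (d + r).+1 + (d + r).+1 + (D - 1) by nia.
  rewrite nu_one ?nu_zero //; nia.
case: (leqP D (9 * d)) => [D9|D9].
  have hma : 2 * (m - a) + D = L - 2 * m by lia.
  have [k ek] : exists k, D = k.+1 by exists D.-1; lia.
  have hkk : k.+1 * k.+1 <= 81 * (d * d) by nia.
  have hi := @count_inj P (fun r => m - 1 - (k * k.+1 + r) - a) d.+1 L.
  apply: leq_trans (hi _ _); first last.
  - move=> u hu; lia.
  - move=> u v hu hv e; nia.
  rewrite all_count // => r hr.
  rewrite /P (@SA m x y) ?(@SC m x y) //; try nia.
  have -> : m - 1 - (a + (m - 1 - (k * k.+1 + r) - a)) = k * k.+1 + r by nia.
  have -> : a + (L - 1 - (m - 1 - (k * k.+1 + r) - a)) - 3 * m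
     = k * k.+1 + k.+1 + r by nia.
  rewrite nu_one ?nu_zero //; nia.
set M := x ++ rev y.
have hsM : size M = 2 * m by rewrite /M size_cat size_rev hx hy; lia.
have hDa : D <= a by lia.
have key : forall N W, N <= m -> N <= D -> 2 * N <= D + L - 2 * m -> W <= 2 * m -> D <= W ->
   count (nth false V) (iota 0 N) <= count P (iota 0 L) + count (nth false M) (iota 0 W).
  move=> N W hN hND hNL hW hDW.
  have hi := @count_inj P (fun u => 3 * m + u - a) N L.
  have hi2 := @count_inj (nth false M) (fun u => D - 1 - u) N W.
  apply: leq_trans (count_sub _ (fun u => nth false M (D - 1 - u)) _) _.
  apply: leq_add; last by apply: hi2 => u v *; lia.
  apply: leq_trans (hi _ _); last by move=> u v *; lia.
    apply/eq_leq/eq_in_count => u; rewrite mem_iota add0n => /andP [_ hu].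
    rewrite /P (@SC m x y) ?(@SM m x y) //; try lia.
    by congr (nth _ _ _ != nth _ _ _); lia.
  move=> u hu; lia.
have oV := @ones_V m.
case: (leqP D m) => [Dm|Dm].
  have k1 := key (6 * d + 4) m ltac:(nia) ltac:(lia) ltac:(nia) ltac:(lia) Dm.
  have k2 : 6 * d + 4 <= 2 * count (nth false V) (iota 0 (6 * d + 4)) := oV (6 * d + 4) ltac:(nia).
  have : count (nth false M) (iota 0 m) = count id x.
    by rewrite -count_nth ?hsM; [rewrite /M take_size_cat | lia].
  lia.
have k1 := key (8 * d + 4) (2 * m) ltac:(nia) ltac:(nia) ltac:(nia) ltac:(lia) ltac:(lia).
have k2 : 8 * d + 4 <= 2 * count (nth false V) (iota 0 (8 * d + 4)) := oV (8 * d + 4) ltac:(nia).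
have : count (nth false M) (iota 0 (2 * m)) = count id x + count id y.
  by rewrite -hsM -count_id_nth /M count_cat count_rev.
lia.
Qed.

Lemma Sx_rev m x y : rev (Sx m x y) = Sx m y x.
Proof. by rewrite /Sx !rev_cat !revK !catA. Qed.

Theorem lemma7p2 :
  exists K N : nat, forall n d : nat,
    N <= n -> 4 %| n -> 1 <= d -> K * (d * d) <= n ->
    forall x y : seq bool,
      size x = n %/ 4 -> count id x = d ->
      size y = n %/ 4 -> ham x y = d.+1 ->
      forall t : seq bool, infix t (s_xy n x y) -> near_pal d t ->
        size t <= 200 * (d * d) + n %/ 2.
Proof.
exists 400, 0 => n d _ h4 hd hK x y hx cx hy hxy t /infixP [s1 [s3 hs]] hnp.
have [m em] : exists m, n = 4 * m by exists (n %/ 4); move/dvdnP: h4 => [k ->]; lia.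
have e4 : n %/ 4 = m by rewrite em; lia.
have e2 : n %/ 2 = 2 * m by rewrite em; lia.
rewrite e4 in hx hy; rewrite e2.
have hS : s_xy n x y = Sx m x y by rewrite /s_xy /Sx e4.
rewrite hS in hs.
have hm : 100 * (d * d) <= m by lia.
have hH : count (fun i => nth false x i != nth false y i) (iota 0 m) = d.+1
  by rewrite -hxy ham_nth ?hx ?hy.
have hH' : count (fun i => nth false y i != nth false x i) (iota 0 m) = d.+1
  by rewrite -hH; apply: eq_count => i; rewrite eq_sym.
have cy : count id y <= count id x + d.+1.
  rewrite !count_id_nth hx hy -hH'; rewrite addnC; apply: count_sub.
have [a ea] : {a | size s1 = a} by eexists.
have [L eL] : {L | size t = L} by eexists.
have hsz := size_Sx hx hy.
have haL : a + L <= 4 * m by rewrite -hsz hs !size_cat ea eL; lia.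
have ht : forall i, i < L -> nth false t i = nth false (Sx m x y) (a + i).
  by move=> i hi; rewrite hs -ea nth_cat ltnNge leq_addr /= addKn nth_cat eL hi.
move: hnp; rewrite /near_pal eL.
rewrite (@eq_in_count _ _ (fun i => nth false (Sx m x y) (a + i) != nth false (Sx m x y) (a + (L - 1 - i)))); last first.
  move=> i; rewrite mem_iota add0n => /andP [_ hi] /=; rewrite !ht //; lia.
move=> hnp; rewrite leqNgt; apply/negP => hL.
case: (leqP (4 * m) (2 * a + L)) => hc.
  by have := leq_trans (core hx hy hd hm ltac:(lia) ltac:(lia) hH haL hc ltac:(lia)) hnp; rewrite ltnn.
have := @core m d y x (4 * m - a - L) L hy hx hd hm ltac:(lia) ltac:(lia) hH' ltac:(lia) ltac:(lia) ltac:(lia).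
rewrite (@eq_in_count _ _ (fun i => nth false (Sx m x y) (a + i) != nth false (Sx m x y) (a + (L - 1 - i)))).
  by move=> h; have := leq_trans h hnp; rewrite ltnn.
move=> i; rewrite mem_iota add0n => /andP [_ hi] /=.
rewrite -Sx_rev !nth_rev ?hsz; try lia.
rewrite eq_sym; congr (nth _ _ _ != nth _ _ _); lia.
Qed.
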